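(* Let $q\ge 2$ be a prime power and $M,D\in\mathbb{N}$ with $D\ge 10$ and $M\le D^2$. Then \[ N_H(M,D)\le\frac{q(D-1)}{q\left(1-\sqrt{\frac{\ln D}{D}}\right)-1}. \]
   Context: $N_H(M,D)$ is the smallest length $r$ such that there exist $M$ vectors $\boldsymbol{p}_1,\ldots,\boldsymbol{p}_M\in\mathbb{F}_q^r$ with pairwise Hamming distance $d_H(\boldsymbol{p}_i,\boldsymbol{p}_j)\ge D$ for all $i\ne j$. *)

(* Defs.v *)
From mathcomp Require Import all_boot all_algebra.


Set Implicit Arguments.
Unset Strict Implicit.
Unset Printing Implicit Defensive.

Definition hamming (F : finFieldType) (r : nat) (u v : {ffun 'I_r -> F}) : nat :=
  #|[set k | u k != v k]|.

Definition code_ok (F : finFieldType) (M D r : nat) : bool :=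
  [exists p : {ffun 'I_M -> {ffun 'I_r -> F}},
     [forall i, forall j, (i != j) ==> (D <= hamming (p i) (p j))]].

Lemma code_ok_exists (F : finFieldType) (M D : nat) : exists r, code_ok F M D r.
Proof.
exists (M * D); apply/existsP.
exists [ffun i : 'I_M => [ffun k : 'I_(M * D) => if k %/ D == i then (1%R : F) else 0%R]].
apply/forallP => i; apply/forallP => j; apply/implyP => ij.
rewrite /hamming.
have lt t : t < D -> i * D + t < M * D.
  move=> tD; have := ltn_ord i => iM.
  apply: (@leq_trans (i.+1 * D)); first by rewrite mulSn addnC ltn_add2r.
  by rewrite leq_mul2r iM orbT.
pose g (t : 'I_D) : 'I_(M * D) := Ordinal (lt t (ltn_ord t)).
have ginj : injective g.
  by move=> a b /(congr1 val) /= /eqP; rewrite eqn_add2l => /eqP ab; apply: val_inj.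
have cD : #|[set g t | t in 'I_D]| = D by rewrite card_imset // card_ord.
rewrite -[X in X <= _]cD; apply: subset_leq_card; apply/subsetP => x /imsetP [t _ ->].
have hD : 0 < D := leq_ltn_trans (leq0n t) (ltn_ord t).
have e : (i * D + t) %/ D = i by rewrite divnMDl // divn_small // addn0.
rewrite inE !ffunE /= e eqxx.
have -> : (val i == val j) = false by apply/negbTE; apply: contra ij => /eqP h; apply/eqP/val_inj.
exact: GRing.oner_neq0.
Qed.

Definition N_H (F : finFieldType) (M D : nat) : nat :=
  ex_minn (code_ok_exists F M D).

(* Main.v *)
Require Import Defs.
From mathcomp Require Import all_boot all_algebra.
From Stdlib Require Import Reals.
From Stdlib Require Import Lra Psatz.
From Coquelicot Require Import Coquelicot.
From mathcomp Require Import Rstruct.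

Section Analysis.
Local Open Scope R_scope.
Lemma mono_nonneg f f' a b : a <= b ->
  (forall c, a <= c <= b -> derivable_pt_lim f c (f' c)) ->
  (forall c, a <= c <= b -> 0 <= f' c) -> f a <= f b.
Proof.
intros hab hd hp. destruct (Req_dec a b) as [->|hne]; [lra|].
destruct (MVT_cor2 f f' a b) as [c [hc1 hc2]]; [lra|exact hd|].
assert (0 <= f' c * (b - a)) by (apply Rmult_le_pos; [apply hp; lra| lra]). lra.
Qed.

Lemma exp_le_mono x y : x <= y -> exp x <= exp y.
Proof. intros h. destruct h as [h|h]. left; apply exp_increasing; exact h. rewrite h; right; reflexivity. Qed.

Lemma hoeff p l : 0 < p < 1 -> 0 <= l ->
  1 - p + p * exp (- l) <= exp (- p * l + l ^ 2 / 8).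
Proof.
intros hp hl.
pose (g := fun x => 1 - p + p * exp (- x)).
assert (gpos : forall x, 0 < g x).
{ intro x; unfold g; pose proof (exp_pos (-x)); nra. }
pose (d1 := fun x => - p + x / 4 + p * exp (- x) / g x).
pose (d2 := fun x => / 4 - p * exp (- x) * (1 - p) / (g x ^ 2)).
pose (phi := fun x => - p * x + x ^ 2 / 8 - ln (g x)).
assert (Hd1 : forall x, derivable_pt_lim phi x (d1 x)).
{ intro x; apply is_derive_Reals. unfold phi, d1, g.
  auto_derive. { pose proof (gpos x); unfold g in *; lra. }
  field. pose proof (gpos x); unfold g in *; lra. }
assert (Hd2 : forall x, derivable_pt_lim d1 x (d2 x)).
{ intro x; apply is_derive_Reals. unfold d1, d2, g.
  auto_derive. { pose proof (gpos x); unfold g in *; lra. }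
  field. pose proof (gpos x); unfold g in *; lra. }
assert (Hd2p : forall x, 0 <= d2 x).
{ intro x. unfold d2. pose proof (gpos x) as G. pose proof (exp_pos (-x)) as E.
  replace (/ 4 - p * exp (- x) * (1 - p) / g x ^ 2) with
    ((p * exp (-x) - (1 - p)) ^ 2 / (4 * g x ^ 2)).
  2: { unfold g in *. field. lra. }
  apply Rmult_le_pos. apply pow2_ge_0. apply Rlt_le, Rinv_0_lt_compat. pose proof (pow_lt (g x) 2 G). lra. }
assert (d10 : d1 0 = 0).
{ unfold d1, g. rewrite Ropp_0 exp_0. field; lra. }
assert (Hd1p : forall c, 0 <= c -> 0 <= d1 c).
{ intros c hc. rewrite -d10.
  apply (mono_nonneg d1 d2 0 c hc); intros; auto. }
assert (phi0 : phi 0 = 0).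
{ unfold phi, g. cbv beta. rewrite Ropp_0 exp_0. replace (1 - p + p * 1) with 1 by ring.
  rewrite ln_1. simpl. field. }
assert (Hphi : 0 <= phi l).
{ rewrite -phi0. apply (mono_nonneg phi d1 0 l hl); intros; auto.
  apply Hd1p; lra. }
unfold phi in Hphi. fold (g l).
rewrite -(exp_ln (g l) (gpos l)).
apply exp_le_mono. lra.
Qed.
Lemma exp_pow a n : exp a ^ n = exp (INR n * a).
Proof.
induction n as [|n IH]. simpl. rewrite Rmult_0_l exp_0. reflexivity.
rewrite S_INR. simpl. rewrite IH -exp_plus. f_equal. ring.
Qed.

Lemma ln_le_sub1 y : 0 < y -> ln y <= y - 1.
Proof. intro hy. pose proof (exp_ineq1_le (ln y)). rewrite (exp_ln y hy) in H. lra. Qed.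

Lemma ln10_ge2 : 2 <= ln 10.
Proof.
left. rewrite -(ln_exp 2). apply ln_increasing. apply exp_pos.
replace 2 with (1 + 1) by ring. rewrite exp_plus. pose proof exp_le_3. pose proof (exp_pos 1). nra.
Qed.

Lemma ln10_lt : ln 10 < 5/2.
Proof.
rewrite -(ln_exp (5/2)). apply ln_increasing. lra.
replace (5/2) with (INR 20 * (1/8)) by (simpl; field).
rewrite -exp_pow.
pose proof (exp_ineq1_le (1/8)).
assert (h : (1 + 1/8) ^ 20 <= exp (1/8) ^ 20).
{ apply pow_incr. lra. }
simpl in h |- *. lra.
Qed.

Lemma lnD_small D : 10 <= D -> 4 * ln D < D.
Proof.
intro hD.
replace (ln D) with (ln 10 + ln (D/10)).
2: { rewrite -(ln_mult 10 (D/10) ltac:(lra) ltac:(lra)). f_equal. field. }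
pose proof (ln_le_sub1 (D/10)). pose proof ln10_lt. lra.
Qed.

Lemma key (q D : R) (n : nat) : 2 <= q -> 10 <= D ->
  let eps := sqrt (ln D / D) in
  let R := q * (D - 1) / (q * (1 - eps) - 1) in
  R - 1 <= INR n <= R ->
  let p := (q - 1) / q in
  let t := INR n * p - (D - 1) in
  let lam := 4 * t / INR n in
  0 <= lam /\
  D ^ 2 * exp (lam * (D - 1)) * (1 - p + p * exp (- lam)) ^ n <= 1.
Proof.
intros hq hD eps R hr p t lam.
set (L := ln D) in *.
assert (hL2 : 2 <= L).
{ unfold L. pose proof ln10_ge2. destruct (Req_dec D 10) as [e|ne]. rewrite e; lra.
  apply Rle_trans with (ln 10). lra. left. apply ln_increasing; lra. }
assert (hL4 : 4 * L < D) by (apply lnD_small; lra).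
assert (he2 : eps * eps = L / D).
{ unfold eps. apply sqrt_sqrt. apply Rmult_le_pos. lra. left; apply Rinv_0_lt_compat; lra. }
assert (heD : eps * eps * D = L) by (rewrite he2; field; lra).
assert (he0 : 0 <= eps) by (unfold eps; apply sqrt_pos).
assert (he4 : eps * eps < 1/4).
{ apply Rmult_lt_reg_r with D. lra. rewrite heD. lra. }
assert (he1 : eps < 1/2) by nra.
assert (hepos : 0 < eps).
{ destruct he0 as [h|h]. exact h. rewrite -h in heD. lra. }
set (den := q * (1 - eps) - 1) in *.
assert (hden : 0 < den) by (unfold den; nra).
assert (hRden : R * den = q * (D - 1)) by (unfold R; field; lra).
assert (hRpos : D - 1 <= R).
{ apply Rmult_le_reg_r with den. exact hden. rewrite hRden. unfold den. nra. }
set (r := INR n) in *.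
assert (hr0 : 0 < r) by lra.
assert (hp : 0 < p < 1).
{ unfold p. split. apply Rdiv_lt_0_compat; lra.
  apply Rmult_lt_reg_r with q. lra. unfold Rdiv. rewrite Rmult_assoc (Rinv_l q ltac:(lra)). lra. }
assert (hReps : R * p - (D - 1) = R * eps).
{ unfold p. apply Rmult_eq_reg_r with q. 2: lra.
  replace ((R * ((q - 1) / q) - (D - 1)) * q) with (R * (q - 1) - q * (D - 1)) by (field; lra).
  rewrite -hRden. unfold den. ring. }
assert (ht : R * eps - p <= t) by (unfold t; nra).
assert (hR1 : (D - 1) <= R * (1 - eps)) by nra.
assert (hkey : eps * (R - D) >= 2) by nra.
assert (htpos : 0 < R * eps - p) by nra.
assert (htt : L <= t * t / r).
{ apply Rle_trans with ((R * eps - p) * (R * eps - p) / R).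
  - apply Rmult_le_reg_r with R. lra.
    replace ((R * eps - p) * (R * eps - p) / R * R) with ((R * eps - p) * (R * eps - p)) by (field; lra).
    rewrite -heD. nra.
  - apply Rle_trans with (t * t / R).
    + unfold Rdiv. apply Rmult_le_compat_r. left; apply Rinv_0_lt_compat; lra. nra.
    + unfold Rdiv. apply Rmult_le_compat_l. nra. apply Rinv_le_contravar; lra. }
assert (hlam : 0 <= lam) by (unfold lam; apply Rmult_le_pos; [lra| left; apply Rinv_0_lt_compat; lra]).
split. exact hlam.
pose proof (hoeff p lam hp hlam) as H.
assert (H2 : (1 - p + p * exp (- lam)) ^ n <= exp (- p * lam + lam ^ 2 / 8) ^ n).
{ apply pow_incr. split. pose proof (exp_pos (-lam)). nra. exact H. }
rewrite exp_pow in H2. fold r in H2.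
replace (D ^ 2) with (exp (2 * L)).
2: { replace (2 * L) with (L + L) by ring. rewrite exp_plus. unfold L. rewrite (exp_ln D ltac:(lra)). simpl. ring. }
apply Rle_trans with (exp (2 * L) * exp (lam * (D - 1)) * exp (r * (- p * lam + lam ^ 2 / 8))).
{ apply Rmult_le_compat_l. left; apply Rmult_lt_0_compat; apply exp_pos. exact H2. }
rewrite -!exp_plus. apply Rle_trans with (exp 0); [| rewrite exp_0; lra]. apply exp_le_mono.
replace (2 * L + lam * (D - 1) + r * (- p * lam + lam ^ 2 / 8)) with (2 * L - 2 * (t * t / r)).
lra.
unfold lam, t. field. lra.
Qed.
End Analysis.
Import ssrnat.
Set Implicit Arguments. Unset Strict Implicit. Unset Printing Implicit Defensive.
Section Greedy.
Variables (F : finFieldType) (r D : nat).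
Local Notation V := {ffun 'I_r -> F}.
Local Open Scope nat_scope.

Definition ball (u : V) := [set v : V | hamming u v < D].

Lemma hamming_sym (u v : V) : hamming u v = hamming v u.
Proof. by rewrite /hamming; apply: eq_card => k; rewrite !inE eq_sym. Qed.

Definition bad (s : seq V) := [set v : V | has (fun w => hamming w v < D) s].

Lemma card_bad (s : seq V) :
  (forall u, D ^ 2 * #|ball u| <= #|F| ^ r) ->
  D ^ 2 * #|bad s| <= size s * #|F| ^ r.
Proof.
move=> Hb; elim: s => [|w s IH].
  rewrite /= mul0n leqn0 muln_eq0; apply/orP; right.
  by rewrite cards_eq0; apply/eqP/setP => v; rewrite !inE.
have -> : bad (w :: s) = ball w :|: bad s by apply/setP => v; rewrite !inE.
rewrite cardsU /= mulSn.
apply: leq_trans (leq_add (Hb w) IH).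
rewrite -mulnDr leq_mul2l leq_subr orbT //.
Qed.

Lemma greedy M :
  0 < D -> M <= D ^ 2 ->
  (forall u, D ^ 2 * #|ball u| <= #|F| ^ r) ->
  code_ok F M D r.
Proof.
move=> D0 MD Hb.
have ex : forall m, m <= M -> exists s : seq V, size s = m /\ pairwise (fun a b => D <= hamming a b) s.
  elim => [|m IH] hm; first by exists [::].
  have [s [ss ps]] := IH (ltnW hm).
  have hlt : #|bad s| < #|V|.
    rewrite card_ffun card_ord.
    have h1 := card_bad s Hb; rewrite ss in h1.
    have q0 : 0 < #|F| ^ r by rewrite expn_gt0 (leq_trans _ (card_finNzRing_gt1 F)).
    have h2 : m * #|F| ^ r < D ^ 2 * #|F| ^ r by rewrite ltn_pmul2r // (leq_trans hm).
    have D2 : 0 < D ^ 2 by rewrite expn_gt0 D0.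
    by rewrite -(ltn_pmul2l D2); exact: leq_ltn_trans h1 h2.
  case: (pickP [pred v | v \notin bad s]) => [v Hv | Hn]; last first.
    have : bad s = setT by apply/setP => v; rewrite in_setT; have := Hn v; rewrite /=; case: (v \in bad s).
    by move=> e; move: hlt; rewrite e cardsT ltnn.
  exists (v :: s); split; first by rewrite /= ss.
  rewrite pairwise_cons ps andbT.
  move: Hv; rewrite /= inE -all_predC => /allP Ha; apply/allP => w ws.
  by have := Ha w ws; rewrite /= -leqNgt hamming_sym.
have [s [ss ps]] := ex M (leqnn M).
apply/existsP; exists [ffun i : 'I_M => nth [ffun => (GRing.zero : F)] s i].
apply/forallP => i; apply/forallP => j; apply/implyP => ij; rewrite !ffunE.
move/(pairwiseP [ffun => (GRing.zero : F)]): ps => Hp.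
have iM : (i : nat) \in gtn (size s) by rewrite inE ss ltn_ord.
have jM : (j : nat) \in gtn (size s) by rewrite inE ss ltn_ord.
case: (ltngtP i j) => h.
- exact: Hp.
- by rewrite hamming_sym; apply: Hp.
- by move: ij; rewrite (val_inj h) eqxx.
Qed.
End Greedy.
Import GRing.Theory Num.Theory.
Section Ball.
Variables (F : finFieldType) (r D : nat).
Local Notation V := {ffun 'I_r -> F}.
Local Open Scope ring_scope.

Lemma ball_sum (u : V) (x : R) :
  \sum_(v : V) x ^+ hamming u v = (1 + (#|F|.-1)%:R * x) ^+ r.
Proof.
have e : forall v : V, x ^+ hamming u v = \prod_(k : 'I_r) (if u k != v k then x else 1).
  move=> v; rewrite /hamming -prodr_const big_mkcond /=.
  by apply: eq_bigr => k _; rewrite inE.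
rewrite (eq_bigr _ (fun v _ => e v)).
rewrite -(bigA_distr_bigA (fun k a => if u k != a then x else 1)) /=.
rewrite -[r in RHS]card_ord -prodr_const.
apply: eq_bigr => k _.
rewrite (bigD1 (u k)) //= eqxx /=.
rewrite (eq_bigr (fun _ => x)); last by move=> a; rewrite eq_sym => ->.
by rewrite sumr_const cardC1 mulr_natl.
Qed.

Lemma ball_le (u : V) (x : R) : (0 < D)%nat -> 0 <= x <= 1 ->
  (#|[set v : V | (hamming u v < D)%nat]|)%:R * x ^+ D.-1 <= (1 + (#|F|.-1)%:R * x) ^+ r.
Proof.
move=> D0 /andP [x0 x1].
rewrite -(ball_sum u) mulr_natl -sumr_const big_mkcond /=.
apply: ler_sum => v _.
case: ifP => hv.
  apply: ler_wiXn2l => //. move: hv; rewrite inE. by case: D D0 => //.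
exact: exprn_ge0.
Qed.
Lemma ball_le' (u : V) (x : R) : (0 < D)%nat -> Rle (IZR 0) x -> Rle x (IZR 1) ->
  Rle (Rmult (INR #|[set v : V | (hamming u v < D)%nat]|) (pow x D.-1))
      (pow (Rplus (IZR 1) (Rmult (INR #|F|.-1) x)) r).
Proof.
move=> D0 h0 h1.
have H := ball_le u D0 (x := x).
rewrite !RpowE !INRE; apply/RleP; apply: H.
by apply/andP; split; apply/RleP.
Qed.
End Ball.

Section Choose.
Local Open Scope R_scope.
Lemma choose_n (q D : R) : 2 <= q -> 10 <= D ->
  exists n : nat, q * (D - 1) / (q * (1 - sqrt (ln D / D)) - 1) - 1 <= INR n
               <= q * (D - 1) / (q * (1 - sqrt (ln D / D)) - 1).
Proof.
intros hq hD.
set (L := ln D).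
set (eps := sqrt (L / D)).
assert (hL2 : 2 <= L).
{ unfold L. pose proof ln10_ge2. destruct (Req_dec D 10) as [e|ne]. rewrite e; lra.
  apply Rle_trans with (ln 10). lra. left. apply ln_increasing; lra. }
assert (hL4 : 4 * L < D) by (apply lnD_small; lra).
assert (he2 : eps * eps = L / D).
{ unfold eps. apply sqrt_sqrt. apply Rmult_le_pos. lra. left; apply Rinv_0_lt_compat; lra. }
assert (heD : eps * eps * D = L) by (rewrite he2; field; lra).
assert (he0 : 0 <= eps) by (unfold eps; apply sqrt_pos).
assert (he4 : eps * eps < 1/4).
{ apply Rmult_lt_reg_r with D. lra. rewrite heD. lra. }
assert (he1 : eps < 1/2) by nra.
set (den := q * (1 - eps) - 1).
assert (hden : 0 < den) by (unfold den; nra).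
set (R0 := q * (D - 1) / den).
assert (hRden : R0 * den = q * (D - 1)) by (unfold R0; field; lra).
assert (hRpos : D - 1 <= R0).
{ apply Rmult_le_reg_r with den. exact hden. rewrite hRden. unfold den. nra. }
destruct (base_Int_part R0) as [h1 h2].
assert (hz : (0 <= Int_part R0)%Z).
{ apply le_IZR. simpl. lra. }
exists (Z.to_nat (Int_part R0)).
rewrite INR_IZR_INZ Znat.Z2Nat.id; [|exact hz].
fold L eps den R0. lra.
Qed.
End Choose.

Lemma final_real (B P Y E1 E2 Dr2 : R) : (0 <= B)%R -> (0 < P)%R -> (E1 * E2 = 1)%R -> (0 < E1)%R ->
  (B * E2 <= P * Y)%R -> (Dr2 * E1 * Y <= 1)%R -> (0 <= Dr2)%R -> (Dr2 * B <= P)%R.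
Proof.
intros h0 h1 h2 h3 h4 h5 h6.
have e : (B * E2 * E1 = B)%R by transitivity (B * (E1 * E2))%R; [ring| rewrite h2; ring].
have a1 := Rmult_le_compat_r E1 _ _ (Rlt_le _ _ h3) h4. rewrite e in a1.
have a2 := Rmult_le_compat_l Dr2 _ _ h6 a1.
have a3 := Rmult_le_compat_l P _ _ (Rlt_le _ _ h1) h5.
have e2 : (Dr2 * (P * Y * E1) = P * (Dr2 * E1 * Y))%R by ring.
lra.
Qed.

Lemma INR_expn a k : INR (expn a k) = pow (INR a) k.
Proof. by rewrite INRE natrX RpowE -INRE. Qed.

From mathcomp Require Import all_boot all_algebra.
From Stdlib Require Import Reals.
Close Scope R_scope.

Theorem lemma4p8 (F : finFieldType) (M D : nat) :
  10 <= D -> M <= D ^ 2 ->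
  (INR (N_H F M D) <=
     INR #|F| * (INR D - 1) /
       (INR #|F| * (1 - sqrt (ln (INR D) / INR D)) - 1))%R.
Proof.
move=> hD hM.
have q1 := card_finNzRing_gt1 F.
have q2 : (2 <= INR #|F|)%R.
  have := le_INR 2 #|F| (leP q1); simpl INR; lra.
have D10 : (10 <= INR D)%R.
  have := le_INR 10 D (leP hD); simpl INR; lra.
have [n hn] := choose_n q2 D10.
have := key _ _ n q2 D10 hn; cbv zeta; case=> hlam hk.
set lam := (4 * _ / INR n)%R in hlam hk.
set p := ((INR #|F| - 1) / INR #|F|)%R in hk.
have D0 : (0 < D)%nat by apply: leq_trans hD.
have e2 : Nat.pow D 2 = expn D 2 by rewrite -mulnn /= Nat.mul_1_r.
have hM' : (M <= expn D 2)%nat by rewrite -e2.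
have code : code_ok F M D n.
  apply: greedy => // u.
  apply/leP; apply: INR_le.
  rewrite mult_INR !INR_expn.
  set x := exp (- lam).
  have x0 : (0 < x)%R by apply: exp_pos.
  have x1 : (x <= 1)%R.
    rewrite /x -exp_0; apply: exp_le_mono; lra.
  have hb := ball_le' u D0 (Rlt_le _ _ x0) x1.
  have eD : INR D.-1 = (INR D - 1)%R.
    by move: D0; case: (D) => [|k] _ //; rewrite S_INR /=; ring.
  have eF : INR #|F|.-1 = (INR #|F| - 1)%R.
    by move: q1; case: (#|F|) => [|k] _ //; rewrite S_INR /=; ring.
  have eY : (1 + INR #|F|.-1 * x = INR #|F| * (1 - p + p * x))%R.
    by rewrite eF /p; field; lra.
  rewrite eY Rpow_mult_distr /x exp_pow eD in hb.
  apply: (final_real (P := (INR #|F| ^ n)%R) (Y := ((1 - p + p * exp (- lam)) ^ n)%R)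
     (E1 := exp (lam * (INR D - 1))) (E2 := exp ((INR D - 1) * - lam))).
  - exact: pos_INR.
  - apply: pow_lt; lra.
  - rewrite -exp_plus -[X in _ = X]exp_0; congr exp; ring.
  - exact: exp_pos.
  - exact: hb.
  - exact: hk.
  - apply: pow_le; lra.
rewrite /N_H; case: ex_minnP => m _ Hmin.
have := le_INR _ _ (leP (Hmin n code)).
case: hn => _ hn2. lra.
Qed.
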